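(* Let $\mathcal C$ be a $G$-category and $(P,\phi)\colon\mathcal C\to\mathcal C/G$ the canonical functor. For every category $\mathcal C'$, the functor $(P,\phi)^*\colon\operatorname{Fun}(\mathcal C/G,\mathcal C')\to\operatorname{Inv}(\mathcal C,\mathcal C')$, sending a functor $H$ to $(HP,H\phi)$ and a natural transformation $\eta\colon H\to H'$ to $\eta P$, is an isomorphism of categories.
   Context: $\Bbbk$ is a commutative ring; all categories and functors are $\Bbbk$-linear; $G$ is a group. A $G$-category is a category $\mathcal C$ with a group homomorphism $A\colon G\to\operatorname{Aut}(\mathcal C)$; write $\alpha x=A_\alpha x$, $\alpha f=A_\alpha f$. An invariance adjuster of $F\colon\mathcal C\to\mathcal C'$ is a family of natural isomorphisms $\phi_\alpha\colon F\to FA_\alpha$ ($\alpha\in G$) with $\phi_1=\mathrm{id}$ and $(\phi_\beta A_\alpha)\phi_\alpha=\phi_{\beta\alpha}$; $(F,\phi)$ is a $G$-invariant functor. A morphism $(F,\phi)\to(F',\phi')$ is a natural transformation $\eta\colon F\to F'$ with $(\eta A_\alpha)\phi_\alpha=\phi'_\alpha\eta$ for all $\alpha$. $\operatorname{Inv}(\mathcal C,\mathcal C')$ is the category of $G$-invariant functors $\mathcal C\to\mathcal C'$ and their morphisms; $\operatorname{Fun}(\mathcal C/G,\mathcal C')$ is the category of functors and natural transformations. The orbit category $\mathcal C/G$: objects those of $\mathcal C$; morphisms $x\to y$ are row- and column-finite families $f=(f_{\beta,\alpha})_{(\alpha,\beta)\in G\times G}$, $f_{\beta,\alpha}\in\mathcal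 C(\alpha x,\beta y)$, with $f_{\gamma\beta,\gamma\alpha}=\gamma(f_{\beta,\alpha})$; composition $(gf)_{\beta,\alpha}=\sum_\gamma g_{\beta,\gamma}f_{\gamma,\alpha}$. The canonical functor: $Px=x$, $P(f)=(\delta_{\alpha,\beta}\alpha f)_{(\alpha,\beta)}$; $\phi_{\mu,x}=(\delta_{\alpha,\beta\mu}\mathrm{id}_{\alpha x})_{(\alpha,\beta)}\colon Px\to P\mu x$. *)

(* Defs.v *)
From HB Require Import structures.
From mathcomp Require Import all_boot all_algebra.
From mathcomp Require Import boolp classical_sets cardinality fsbigop.
From Stdlib Require Import FunctionalExtensionality ProofIrrelevance.

Set Implicit Arguments.
Unset Strict Implicit.
Unset Printing Implicit Defensive.

Import GRing.Theory.
Local Open Scope ring_scope.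

Record lincat (k : pzRingType) := LinCat {
  lob : Type;
  lhom : lob -> lob -> lmodType k;
  lidm : forall x, lhom x x;
  lcomp : forall x y z, lhom y z -> lhom x y -> lhom x z }.
Arguments lob {k} C : rename.
Arguments lhom {k} C x y : rename.
Arguments lidm {k} C x : rename.
Arguments lcomp {k C x y z} g f : rename.

Record lincat_laws (k : pzRingType) (C : lincat k) : Prop := LinCatLaws {
  comp1m : forall x y (f : lhom C x y), lcomp (lidm C y) f = f;
  compm1 : forall x y (f : lhom C x y), lcomp f (lidm C x) = f;
  compA : forall x y z w (h : lhom C z w) (g : lhom C y z) (f : lhom C x y),
    lcomp h (lcomp g f) = lcomp (lcomp h g) f;
  compDl : forall x y z (g1 g2 : lhom C y z) (f : lhom C x y),
    lcomp (g1 + g2) f = lcomp g1 f + lcomp g2 f;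
  compDr : forall x y z (g : lhom C y z) (f1 f2 : lhom C x y),
    lcomp g (f1 + f2) = lcomp g f1 + lcomp g f2;
  compZl : forall x y z (a : k) (g : lhom C y z) (f : lhom C x y),
    lcomp (a *: g) f = a *: lcomp g f;
  compZr : forall x y z (a : k) (g : lhom C y z) (f : lhom C x y),
    lcomp g (a *: f) = a *: lcomp g f }.

Definition hcast (k : pzRingType) (C : lincat k) (x x' y y' : lob C)
    (ex : x = x') (ey : y = y') (f : lhom C x y) : lhom C x' y' :=
  match ex in _ = x0, ey in _ = y0 return lhom C x0 y0 with
  | erefl, erefl => f end.

Record lfunctor (k : pzRingType) (C D : lincat k) := LFunctor {
  fob : lob C -> lob D;
  fhom : forall x y, lhom C x y -> lhom D (fob x) (fob y);
  fhom_id : forall x, fhom (lidm C x) = lidm D (fob x);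
  fhom_comp : forall x y z (g : lhom C y z) (f : lhom C x y),
    fhom (lcomp g f) = lcomp (fhom g) (fhom f);
  fhom_add : forall x y (f g : lhom C x y), fhom (f + g) = fhom f + fhom g;
  fhom_scale : forall x y (a : k) (f : lhom C x y),
    fhom (a *: f) = a *: fhom f }.
Arguments fob {k C D} F x : rename.
Arguments fhom {k C D} F {x y} f : rename.

Record ntrans (k : pzRingType) (C D : lincat k) (F G : lfunctor C D) :=
  NTrans {
  ncomp : forall x, lhom D (fob F x) (fob G x);
  nnat : forall x y (f : lhom C x y),
    lcomp (ncomp y) (fhom F f) = lcomp (fhom G f) (ncomp x) }.
Arguments ncomp {k C D F G} eta x : rename.

(* A G-category: a group homomorphism A : G -> Aut(C), i.e. A_1 = Id and
   A_(a b) = A_a A_b as functors (equality of functors = equality on objects,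
   and on morphisms up to the induced transport).  Each A_a is then an
   automorphism (with inverse A_(a^-1)). *)
Record gcat (k : pzRingType) (G : groupType) (C : lincat k) := GCat {
  act : G -> lfunctor C C;
  act1_ob : forall x, fob (act 1%g) x = x;
  actM_ob : forall (a b : G) x,
    fob (act (a * b)%g) x = fob (act a) (fob (act b) x);
  act1_hom : forall x y (f : lhom C x y),
    hcast (act1_ob x) (act1_ob y) (fhom (act 1%g) f) = f;
  actM_hom : forall (a b : G) x y (f : lhom C x y),
    hcast (actM_ob a b x) (actM_ob a b y) (fhom (act (a * b)%g) f)
    = fhom (act a) (fhom (act b) f) }.
Arguments act {k G C} A a : rename.
Arguments act1_ob {k G C} A x : rename.
Arguments actM_ob {k G C} A a b x : rename.

Record cat := Cat {
  cob : Type;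
  chom : cob -> cob -> Type;
  cid : forall x, chom x x;
  ccomp : forall x y z, chom y z -> chom x y -> chom x z }.
Arguments chom : clear implicits.
Arguments cid : clear implicits.
Arguments ccomp {C x y z} g f : rename.

Record functor (C D : cat) := Functor {
  Fob : cob C -> cob D;
  Fhom : forall x y, chom C x y -> chom D (Fob x) (Fob y);
  Fhom_id : forall x, Fhom (cid C x) = cid D (Fob x);
  Fhom_comp : forall x y z (g : chom C y z) (f : chom C x y),
    Fhom (ccomp g f) = ccomp (Fhom g) (Fhom f) }.
Arguments Fob {C D} F x : rename.
Arguments Fhom {C D} F {x y} f : rename.

Definition ccast (C : cat) (x x' y y' : cob C) (ex : x = x') (ey : y = y')
    (f : chom C x y) : chom C x' y' :=
  match ex in _ = x0, ey in _ = y0 return chom C x0 y0 with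
  | erefl, erefl => f end.

Definition functor_id (C : cat) : functor C C :=
  @Functor C C (fun x => x) (fun x y f => f) (fun x => erefl)
    (fun x y z g f => erefl).

Lemma functor_comp_id (C D E : cat) (F : functor D E) (G : functor C D) x :
  Fhom F (Fhom G (cid C x)) = cid E (Fob F (Fob G x)).
Proof. by rewrite !Fhom_id. Qed.

Lemma functor_comp_comp (C D E : cat) (F : functor D E) (G : functor C D)
  x y z (g : chom C y z) (f : chom C x y) :
  Fhom F (Fhom G (ccomp g f)) = ccomp (Fhom F (Fhom G g)) (Fhom F (Fhom G f)).
Proof. by rewrite !Fhom_comp. Qed.

Definition functor_comp (C D E : cat) (F : functor D E) (G : functor C D) :
    functor C E :=
  @Functor C E (fun x => Fob F (Fob G x)) (fun x y f => Fhom F (Fhom G f))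
    (functor_comp_id F G) (functor_comp_comp F G).

Definition functor_eq (C D : cat) (F F' : functor C D) : Prop :=
  exists e : forall x, Fob F x = Fob F' x,
    forall x y (f : chom C x y), ccast (e x) (e y) (Fhom F f) = Fhom F' f.

Definition cat_iso (C D : cat) (F : functor C D) : Prop :=
  exists F' : functor D C,
    functor_eq (functor_comp F' F) (functor_id C) /\
    functor_eq (functor_comp F F') (functor_id D).

Lemma ntrans_id_nat (k : pzRingType) (C D : lincat k) (hD : lincat_laws D)
  (F : lfunctor C D) x y (f : lhom C x y) :
  lcomp (lidm D (fob F y)) (fhom F f) = lcomp (fhom F f) (lidm D (fob F x)).
Proof. by rewrite comp1m // compm1. Qed.

Definition ntrans_id (k : pzRingType) (C D : lincat k) (hD : lincat_laws D)
  (F : lfunctor C D) : ntrans F F :=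
  @NTrans k C D F F (fun x => lidm D (fob F x)) (ntrans_id_nat hD F).

Lemma ntrans_comp_nat (k : pzRingType) (C D : lincat k) (hD : lincat_laws D)
  (F1 F2 F3 : lfunctor C D) (e2 : ntrans F2 F3) (e1 : ntrans F1 F2)
  x y (f : lhom C x y) :
  lcomp (lcomp (ncomp e2 y) (ncomp e1 y)) (fhom F1 f)
  = lcomp (fhom F3 f) (lcomp (ncomp e2 x) (ncomp e1 x)).
Proof. by rewrite -compA // nnat compA // nnat -compA. Qed.

Definition ntrans_comp (k : pzRingType) (C D : lincat k) (hD : lincat_laws D)
  (F1 F2 F3 : lfunctor C D) (e2 : ntrans F2 F3) (e1 : ntrans F1 F2) :
  ntrans F1 F3 :=
  @NTrans k C D F1 F3 (fun x => lcomp (ncomp e2 x) (ncomp e1 x))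
    (ntrans_comp_nat hD e2 e1).

Definition Funcat (k : pzRingType) (C D : lincat k) (hD : lincat_laws D) : cat :=
  @Cat (lfunctor C D) (@ntrans k C D) (ntrans_id hD)
    (fun F1 F2 F3 e2 e1 => ntrans_comp hD e2 e1).

Record invfun (k : pzRingType) (G : groupType) (C D : lincat k)
    (A : gcat G C) := InvFun {
  ifun : lfunctor C D;
  iadj : forall (a : G) x, lhom D (fob ifun x) (fob ifun (fob (act A a) x));
  iadj_nat : forall (a : G) x y (f : lhom C x y),
    lcomp (iadj a y) (fhom ifun f)
    = lcomp (fhom ifun (fhom (act A a) f)) (iadj a x);
  iadj_iso : forall (a : G) x,
    exists g : lhom D (fob ifun (fob (act A a) x)) (fob ifun x),
      lcomp g (iadj a x) = lidm D _ /\ lcomp (iadj a x) g = lidm D _;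
  iadj1 : forall x,
    hcast erefl (f_equal (fob ifun) (act1_ob A x)) (iadj 1%g x)
    = lidm D (fob ifun x);
  iadjM : forall (a b : G) x,
    hcast erefl (f_equal (fob ifun) (actM_ob A b a x)) (iadj (b * a)%g x)
    = lcomp (iadj b (fob (act A a) x)) (iadj a x) }.
Arguments ifun {k G C D A} F : rename.
Arguments iadj {k G C D A} F a x : rename.

Record invmor (k : pzRingType) (G : groupType) (C D : lincat k)
    (A : gcat G C) (F F' : invfun D A) := InvMor {
  imor : ntrans (ifun F) (ifun F');
  imor_adj : forall (a : G) x,
    lcomp (ncomp imor (fob (act A a) x)) (iadj F a x)
    = lcomp (iadj F' a x) (ncomp imor x) }.
Arguments imor {k G C D A F F'} m : rename.

Lemma invmor_id_adj (k : pzRingType) (G : groupType) (C D : lincat k)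
  (A : gcat G C) (hD : lincat_laws D) (F : invfun D A) (a : G) x :
  lcomp (ncomp (ntrans_id hD (ifun F)) (fob (act A a) x)) (iadj F a x)
  = lcomp (iadj F a x) (ncomp (ntrans_id hD (ifun F)) x).
Proof. by rewrite /= comp1m // compm1. Qed.

Definition invmor_id (k : pzRingType) (G : groupType) (C D : lincat k)
  (A : gcat G C) (hD : lincat_laws D) (F : invfun D A) : invmor F F :=
  @InvMor k G C D A F F (ntrans_id hD (ifun F)) (invmor_id_adj hD F).

Lemma invmor_comp_adj (k : pzRingType) (G : groupType) (C D : lincat k)
  (A : gcat G C) (hD : lincat_laws D) (F1 F2 F3 : invfun D A)
  (m2 : invmor F2 F3) (m1 : invmor F1 F2) (a : G) x :
  lcomp (ncomp (ntrans_comp hD (imor m2) (imor m1)) (fob (act A a) x))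
    (iadj F1 a x)
  = lcomp (iadj F3 a x) (ncomp (ntrans_comp hD (imor m2) (imor m1)) x).
Proof.
by rewrite /= -compA // imor_adj compA // imor_adj -compA.
Qed.

Definition invmor_comp (k : pzRingType) (G : groupType) (C D : lincat k)
  (A : gcat G C) (hD : lincat_laws D) (F1 F2 F3 : invfun D A)
  (m2 : invmor F2 F3) (m1 : invmor F1 F2) : invmor F1 F3 :=
  @InvMor k G C D A F1 F3 (ntrans_comp hD (imor m2) (imor m1))
    (invmor_comp_adj hD m2 m1).

Definition Invcat (k : pzRingType) (G : groupType) (C D : lincat k)
  (A : gcat G C) (hD : lincat_laws D) : cat :=
  @Cat (invfun D A) (@invmor k G C D A) (invmor_id hD)
    (fun F1 F2 F3 m2 m1 => invmor_comp hD m2 m1).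

Lemma hcast0 (k : pzRingType) (C : lincat k) (x x' y y' : lob C)
  (ex : x = x') (ey : y = y') : hcast ex ey 0 = 0.
Proof. by destruct ex, ey. Qed.

Lemma hcastD (k : pzRingType) (C : lincat k) (x x' y y' : lob C)
  (ex : x = x') (ey : y = y') (f g : lhom C x y) :
  hcast ex ey (f + g) = hcast ex ey f + hcast ex ey g.
Proof. by destruct ex, ey. Qed.

Lemma hcastN (k : pzRingType) (C : lincat k) (x x' y y' : lob C)
  (ex : x = x') (ey : y = y') (f : lhom C x y) :
  hcast ex ey (- f) = - hcast ex ey f.
Proof. by destruct ex, ey. Qed.

Lemma hcastZ (k : pzRingType) (C : lincat k) (x x' y y' : lob C)
  (ex : x = x') (ey : y = y') (a : k) (f : lhom C x y) :
  hcast ex ey (a *: f) = a *: hcast ex ey f.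
Proof. by destruct ex, ey. Qed.

Lemma fhom0 (k : pzRingType) (C D : lincat k) (F : lfunctor C D) x y :
  fhom F (0 : lhom C x y) = 0.
Proof. by apply: (@addrI _ (fhom F (0 : lhom C x y))); rewrite -fhom_add !addr0. Qed.

Lemma fhomN (k : pzRingType) (C D : lincat k) (F : lfunctor C D) x y
  (f : lhom C x y) : fhom F (- f) = - fhom F f.
Proof.
by apply: (@addrI _ (fhom F f)); rewrite -fhom_add !subrr fhom0.
Qed.

(* Families f = (f_{b,a}) with f_{b,a} in C(a x, b y); we write them as
   [fam a b] (source index a, target index b). *)
Definition ofamily (k : pzRingType) (G : groupType) (C : lincat k)
  (A : gcat G C) (x y : lob C) : Type :=
  forall a b : G, lhom C (fob (act A a) x) (fob (act A b) y).

Definition ofamily_ok (k : pzRingType) (G : groupType) (C : lincat k)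
  (A : gcat G C) (x y : lob C) (f : ofamily A x y) : Prop :=
  [/\ (forall a : G, finite_set [set b : G | f a b != 0]),
      (forall b : G, finite_set [set a : G | f a b != 0]) &
      (forall g a b : G,
        hcast (actM_ob A g a x) (actM_ob A g b y) (f (g * a)%g (g * b)%g)
        = fhom (act A g) (f a b))].

Record ohom (k : pzRingType) (G : groupType) (C : lincat k) (A : gcat G C)
    (x y : lob C) := OHom {
  ofam : ofamily A x y;
  ofam_ok : ofamily_ok ofam }.
Arguments ofam {k G C A x y} f a b : rename.

HB.instance Definition _ (k : pzRingType) (G : groupType) (C : lincat k)
  (A : gcat G C) (x y : lob C) := gen_eqMixin (ohom A x y).
HB.instance Definition _ (k : pzRingType) (G : groupType) (C : lincat k)
  (A : gcat G C) (x y : lob C) := gen_choiceMixin (ohom A x y).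

Lemma ohom_ext (k : pzRingType) (G : groupType) (C : lincat k) (A : gcat G C)
  (x y : lob C) (f g : ohom A x y) :
  (forall a b, ofam f a b = ofam g a b) -> f = g.
Proof.
case: f g => f fP [g gP] /= efg.
have E : f = g.
  by apply: functional_extensionality_dep => a;
     apply: functional_extensionality_dep => b; exact: efg.
by subst g; rewrite (proof_irrelevance _ fP gP).
Qed.

Lemma ofamily0_ok (k : pzRingType) (G : groupType) (C : lincat k)
  (A : gcat G C) (x y : lob C) :
  ofamily_ok (fun a b => 0 : lhom C (fob (act A a) x) (fob (act A b) y)).
Proof.
split.
- by move=> a; apply: sub_finite_set (finite_set0 G) => b /=; rewrite eqxx.
- by move=> b; apply: sub_finite_set (finite_set0 G) => a /=; rewrite eqxx.
- by move=> g a b; rewrite hcast0 fhom0.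
Qed.

Lemma ofamilyD_ok (k : pzRingType) (G : groupType) (C : lincat k)
  (A : gcat G C) (x y : lob C) (f g : ohom A x y) :
  ofamily_ok (fun a b => ofam f a b + ofam g a b).
Proof.
case: f g => f [f1 f2 f3] [g [g1 g2 g3]] /=; split.
- move=> a; apply: (@sub_finite_set _ _
    ([set b | f a b != 0] `|` [set b | g a b != 0])).
    move=> b /= fg; have [f0|fn0] := eqVneq (f a b) 0; last by left.
    by right; apply/negP => /eqP g0; move: fg; rewrite f0 g0 addr0 eqxx.
  by rewrite finite_setU; split.
- move=> b; apply: (@sub_finite_set _ _
    ([set a | f a b != 0] `|` [set a | g a b != 0])).
    move=> a /= fg; have [f0|fn0] := eqVneq (f a b) 0; last by left.
    by right; apply/negP => /eqP g0; move: fg; rewrite f0 g0 addr0 eqxx.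
  by rewrite finite_setU; split.
- by move=> h a b; rewrite hcastD fhom_add f3 g3.
Qed.

Lemma ofamilyN_ok (k : pzRingType) (G : groupType) (C : lincat k)
  (A : gcat G C) (x y : lob C) (f : ohom A x y) :
  ofamily_ok (fun a b => - ofam f a b).
Proof.
case: f => f [f1 f2 f3] /=; split.
- by move=> a; apply: sub_finite_set (f1 a) => b /=; rewrite oppr_eq0.
- by move=> b; apply: sub_finite_set (f2 b) => a /=; rewrite oppr_eq0.
- by move=> h a b; rewrite hcastN fhomN f3.
Qed.

Lemma ofamilyZ_ok (k : pzRingType) (G : groupType) (C : lincat k)
  (A : gcat G C) (x y : lob C) (c : k) (f : ohom A x y) :
  ofamily_ok (fun a b => c *: ofam f a b).
Proof.
case: f => f [f1 f2 f3] /=; split.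
- move=> a; apply: sub_finite_set (f1 a) => b /=.
  by apply: contraNN => /eqP ->; rewrite scaler0.
- move=> b; apply: sub_finite_set (f2 b) => a /=.
  by apply: contraNN => /eqP ->; rewrite scaler0.
- by move=> h a b; rewrite hcastZ fhom_scale f3.
Qed.

Definition ohom0 (k : pzRingType) (G : groupType) (C : lincat k)
  (A : gcat G C) (x y : lob C) : ohom A x y := OHom (ofamily0_ok A x y).
Definition ohomD (k : pzRingType) (G : groupType) (C : lincat k)
  (A : gcat G C) (x y : lob C) (f g : ohom A x y) : ohom A x y :=
  OHom (ofamilyD_ok f g).
Definition ohomN (k : pzRingType) (G : groupType) (C : lincat k)
  (A : gcat G C) (x y : lob C) (f : ohom A x y) : ohom A x y :=
  OHom (ofamilyN_ok f).
Definition ohomZ (k : pzRingType) (G : groupType) (C : lincat k)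
  (A : gcat G C) (x y : lob C) (c : k) (f : ohom A x y) : ohom A x y :=
  OHom (ofamilyZ_ok c f).

Lemma ohomA (k : pzRingType) (G : groupType) (C : lincat k)
  (A : gcat G C) (x y : lob C) : associative (@ohomD k G C A x y).
Proof. by move=> f g h; apply: ohom_ext => a b /=; rewrite addrA. Qed.
Lemma ohomC (k : pzRingType) (G : groupType) (C : lincat k)
  (A : gcat G C) (x y : lob C) : commutative (@ohomD k G C A x y).
Proof. by move=> f g; apply: ohom_ext => a b /=; rewrite addrC. Qed.
Lemma ohom0D (k : pzRingType) (G : groupType) (C : lincat k)
  (A : gcat G C) (x y : lob C) : left_id (ohom0 A x y) (@ohomD k G C A x y).
Proof. by move=> f; apply: ohom_ext => a b /=; rewrite add0r. Qed.
Lemma ohomND (k : pzRingType) (G : groupType) (C : lincat k)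
  (A : gcat G C) (x y : lob C) :
  left_inverse (ohom0 A x y) (@ohomN k G C A x y) (@ohomD k G C A x y).
Proof. by move=> f; apply: ohom_ext => a b /=; rewrite addNr. Qed.

HB.instance Definition _ (k : pzRingType) (G : groupType) (C : lincat k)
  (A : gcat G C) (x y : lob C) :=
  GRing.isZmodule.Build (ohom A x y) (@ohomA k G C A x y) (@ohomC k G C A x y)
    (@ohom0D k G C A x y) (@ohomND k G C A x y).

Lemma ohomZA (k : pzRingType) (G : groupType) (C : lincat k)
  (A : gcat G C) (x y : lob C) (a b : k) (f : ohom A x y) :
  ohomZ a (ohomZ b f) = ohomZ (a * b) f.
Proof. by apply: ohom_ext => u v /=; rewrite scalerA. Qed.
Lemma ohomZ1 (k : pzRingType) (G : groupType) (C : lincat k)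
  (A : gcat G C) (x y : lob C) : left_id 1 (@ohomZ k G C A x y).
Proof. by move=> f; apply: ohom_ext => u v /=; rewrite scale1r. Qed.
Lemma ohomZDr (k : pzRingType) (G : groupType) (C : lincat k)
  (A : gcat G C) (x y : lob C) :
  right_distributive (@ohomZ k G C A x y) +%R.
Proof. by move=> c f g; apply: ohom_ext => u v /=; rewrite scalerDr. Qed.
Lemma ohomZDl (k : pzRingType) (G : groupType) (C : lincat k)
  (A : gcat G C) (x y : lob C) (f : ohom A x y) :
  {morph (@ohomZ k G C A x y)^~ f : a b / a + b}.
Proof. by move=> a b; apply: ohom_ext => u v /=; rewrite scalerDl. Qed.

HB.instance Definition _ (k : pzRingType) (G : groupType) (C : lincat k)
  (A : gcat G C) (x y : lob C) :=
  GRing.Zmodule_isLmodule.Build k (ohom A x y) (@ohomZA k G C A x y)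
    (@ohomZ1 k G C A x y) (@ohomZDr k G C A x y) (@ohomZDl k G C A x y).

(* For the families used below
   (P f, phi, composites) the conditions hold whenever C is a k-linear
   G-category; the default value 0 is only a totalization device. *)
Definition to_ohom (k : pzRingType) (G : groupType) (C : lincat k)
  (A : gcat G C) (x y : lob C) (f : ofamily A x y) : ohom A x y :=
  match pselect (ofamily_ok f) with
  | left p => OHom p
  | right _ => 0
  end.

Definition ocomp (k : pzRingType) (G : groupType) (C : lincat k)
  (A : gcat G C) (x y z : lob C) (g : ohom A y z) (f : ohom A x y) :
  ohom A x z :=
  to_ohom (fun a b => \sum_(c \in [set: G]) lcomp (ofam g c b) (ofam f a c)).

Definition Pfam (k : pzRingType) (G : groupType) (C : lincat k)
  (A : gcat G C) (x y : lob C) (f : lhom C x y) : ofamily A x y :=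
  fun a b =>
    match a =P b with
    | ReflectT e =>
        hcast erefl (f_equal (fun c => fob (act A c) y) e) (fhom (act A a) f)
    | ReflectF _ => 0
    end.

Definition Pmor (k : pzRingType) (G : groupType) (C : lincat k)
  (A : gcat G C) (x y : lob C) (f : lhom C x y) : ohom A x y :=
  to_ohom (Pfam A f).

Definition phifam (k : pzRingType) (G : groupType) (C : lincat k)
  (A : gcat G C) (mu : G) (x : lob C) : ofamily A x (fob (act A mu) x) :=
  fun a b =>
    match a =P (b * mu)%g with
    | ReflectT e =>
        hcast erefl
          (etrans (f_equal (fun c => fob (act A c) x) e) (actM_ob A b mu x))
          (lidm C (fob (act A a) x))
    | ReflectF _ => 0
    end.

Definition phican (k : pzRingType) (G : groupType) (C : lincat k)
  (A : gcat G C) (mu : G) (x : lob C) : ohom A x (fob (act A mu) x) :=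
  to_ohom (phifam A mu x).

Definition orbit_cat (k : pzRingType) (G : groupType) (C : lincat k)
  (A : gcat G C) : lincat k :=
  @LinCat k (lob C) (fun x y => ohom A x y : lmodType k)
    (fun x => Pmor A (lidm C x)) (@ocomp k G C A).

(* Main.v *)
Require Import Defs.
From HB Require Import structures.
From mathcomp Require Import all_boot all_algebra.
From mathcomp Require Import finmap boolp classical_sets cardinality fsbigop.
From Stdlib Require Import FunctionalExtensionality ProofIrrelevance.

Set Implicit Arguments.
Unset Strict Implicit.
Unset Printing Implicit Defensive.
Import GRing.Theory.
Local Open Scope ring_scope.
Local Open Scope classical_set_scope.


Section Casts.
Variables (k : pzRingType) (C : lincat k).

Lemma hcast_pi (x x' y y' : lob C) (p p' : x = x') (q q' : y = y') (f : lhom C x y) :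
  hcast p q f = hcast p' q' f.
Proof. by rewrite (proof_irrelevance _ p p') (proof_irrelevance _ q q'). Qed.

Lemma hcast_id (x y : lob C) (p : x = x) (q : y = y) (f : lhom C x y) :
  hcast p q f = f.
Proof. by rewrite (proof_irrelevance _ p erefl) (proof_irrelevance _ q erefl). Qed.

Lemma hcast_trans (x x' x'' y y' y'' : lob C) (p : x' = x'') (q : y' = y'')
  (p' : x = x') (q' : y = y') (f : lhom C x y) :
  hcast p q (hcast p' q' f) = hcast (etrans p' p) (etrans q' q) f.
Proof. by destruct p, q, p', q'. Qed.

Lemma hcast_lcomp (x x' y y' z z' : lob C) (p : x = x') (q : y = y') (r : z = z')
  (g : lhom C y z) (f : lhom C x y) :
  hcast p r (lcomp g f) = lcomp (hcast q r g) (hcast p q f).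
Proof. by destruct p, q, r. Qed.

Definition idc (x y : lob C) (e : x = y) : lhom C x y := hcast erefl e (lidm C x).

Lemma idc_pi (x y : lob C) (e e' : x = y) : idc e = idc e'.
Proof. by rewrite (proof_irrelevance _ e e'). Qed.

Lemma idc_refl (x : lob C) (e : x = x) : idc e = lidm C x.
Proof. by rewrite /idc hcast_id. Qed.

Hypothesis hC : lincat_laws C.

Lemma lcomp_idcl (x y z : lob C) (e : y = z) (f : lhom C x y) :
  lcomp (idc e) f = hcast erefl e f.
Proof. by destruct e; rewrite /idc /= comp1m. Qed.

Lemma lcomp_idcr (x y z : lob C) (e : x = y) (f : lhom C y z) :
  lcomp f (idc e) = hcast (esym e) erefl f.
Proof. by destruct e; rewrite /idc /= compm1. Qed.

Lemma idc_comp (x y z : lob C) (e : y = z) (e' : x = y) :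
  lcomp (idc e) (idc e') = idc (etrans e' e).
Proof. by destruct e, e'; rewrite /idc /= comp1m. Qed.

Lemma lcomp0 (x y z : lob C) (g : lhom C y z) : lcomp g (0 : lhom C x y) = 0.
Proof. by apply: (@addrI _ (lcomp g (0 : lhom C x y))); rewrite -compDr // !addr0. Qed.

Lemma lcomp0l (x y z : lob C) (f : lhom C x y) : lcomp (0 : lhom C y z) f = 0.
Proof. by apply: (@addrI _ (lcomp (0 : lhom C y z) f)); rewrite -compDl // !addr0. Qed.

Lemma lcomp_suml (I : Type) (r : seq I) (x y z : lob C) (F : I -> lhom C y z)
  (f : lhom C x y) : lcomp (\sum_(i <- r) F i) f = \sum_(i <- r) lcomp (F i) f.
Proof.
elim: r => [|i r IH]; first by rewrite !big_nil lcomp0l.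
by rewrite !big_cons compDl // IH.
Qed.

Lemma lcomp_sumr (I : Type) (r : seq I) (x y z : lob C) (g : lhom C y z)
  (F : I -> lhom C x y) : lcomp g (\sum_(i <- r) F i) = \sum_(i <- r) lcomp g (F i).
Proof.
elim: r => [|i r IH]; first by rewrite !big_nil lcomp0.
by rewrite !big_cons compDr // IH.
Qed.

End Casts.

Lemma fhom_hcast (k : pzRingType) (C D : lincat k) (F : lfunctor C D)
  (x x' y y' : lob C) (p : x = x') (q : y = y') (f : lhom C x y) :
  fhom F (hcast p q f) = hcast (f_equal (fob F) p) (f_equal (fob F) q) (fhom F f).
Proof. by destruct p, q. Qed.

Lemma fhom_idc (k : pzRingType) (C D : lincat k) (F : lfunctor C D)
  (x y : lob C) (e : x = y) : fhom F (idc e) = idc (f_equal (fob F) e).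
Proof. by destruct e; rewrite /idc /= fhom_id. Qed.

Lemma fhom_sum (k : pzRingType) (C D : lincat k) (F : lfunctor C D)
  (I : Type) (r : seq I) (x y : lob C) (f : I -> lhom C x y) :
  fhom F (\sum_(i <- r) f i) = \sum_(i <- r) fhom F (f i).
Proof.
elim: r => [|i r IH]; first by rewrite !big_nil fhom0.
by rewrite !big_cons fhom_add IH.
Qed.


Section FSums.
Variables (T : choiceType).

Definition supp (V : zmodType) (F : T -> V) : set T := [set i | F i != 0].

Lemma notin_fset_set (S : set T) (fS : finite_set S) i :
  i \notin fset_set S -> ~ S i.
Proof. by rewrite in_fset_set // => /negP H Si; apply: H; rewrite inE. Qed.

Lemma fsum_fset (V : zmodType) (A : {fset T}) (F : T -> V) :
  (forall i, i \notin A -> F i = 0) ->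
  \sum_(i \in [set: T]) F i = \sum_(i <- A) F i.
Proof. exact: fsbigTE. Qed.

Lemma fsum_supp (V : zmodType) (F : T -> V) (fin : finite_set (supp F)) :
  \sum_(i \in [set: T]) F i = \sum_(i <- fset_set (supp F)) F i.
Proof.
apply: fsum_fset => i /(notin_fset_set fin) => H.
by apply/eqP; apply: contra_notT H.
Qed.

Lemma fsum_sub (V : zmodType) (F : T -> V) (S : set T) (fin : finite_set S) :
  supp F `<=` S ->
  \sum_(i \in [set: T]) F i = \sum_(i <- fset_set S) F i.
Proof.
move=> sub; apply: fsum_fset => i /(notin_fset_set fin) => H.
by apply/eqP; apply: contra_notT H => /sub.
Qed.

Lemma fsum_lin (V W : zmodType) (phi : V -> W) (phi0 : phi 0 = 0)
  (phiD : forall u v, phi (u + v) = phi u + phi v)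
  (F : T -> V) (fin : finite_set (supp F)) :
  phi (\sum_(i \in [set: T]) F i) = \sum_(i \in [set: T]) phi (F i).
Proof.
rewrite (fsum_supp fin) (@fsum_sub _ (fun i => phi (F i)) _ fin); last first.
  by move=> i /=; apply: contraNN => /eqP ->; rewrite phi0.
have gen (r : seq T) : phi (\sum_(i <- r) F i) = \sum_(i <- r) phi (F i).
  elim: r => [|i r IH]; first by rewrite !big_nil.
  by rewrite !big_cons phiD IH.
exact: gen.
Qed.

Lemma fsum_add (V : zmodType) (F F' : T -> V)
  (fin : finite_set (supp F)) (fin' : finite_set (supp F')) :
  \sum_(i \in [set: T]) (F i + F' i)
  = \sum_(i \in [set: T]) F i + \sum_(i \in [set: T]) F' i.
Proof.
have finU : finite_set (supp F `|` supp F') by rewrite finite_setU.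
have s1 : supp F `<=` supp F `|` supp F' by move=> i; left.
have s2 : supp F' `<=` supp F `|` supp F' by move=> i; right.
have s3 : supp (fun i => F i + F' i) `<=` supp F `|` supp F'.
  rewrite /supp => i /=; case: (eqVneq (F i) 0) => [->|]; last by left.
  by rewrite add0r; right.
by rewrite (fsum_sub finU s1) (fsum_sub finU s2) (fsum_sub finU s3) big_split.
Qed.

Lemma fsum_single (V : zmodType) (F : T -> V) (i0 : T) :
  (forall i, i != i0 -> F i = 0) -> \sum_(i \in [set: T]) F i = F i0.
Proof.
move=> H; rewrite (@fsum_fset _ [fset i0]%fset) ?big_seq_fset1 //.
by move=> i; rewrite inE => /H.
Qed.

Lemma fsum0 (V : zmodType) (F : T -> V) :
  (forall i, F i = 0) -> \sum_(i \in [set: T]) F i = 0.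
Proof. by move=> H; apply: fsbig1 => i _; apply: H. Qed.

Lemma fsum_exchange (V : zmodType) (F : T -> T -> V) (S D : set T)
  (fS : finite_set S) (fD : finite_set D) :
  (forall c d, F c d != 0 -> S c /\ D d) ->
  \sum_(c \in [set: T]) \sum_(d \in [set: T]) F c d
  = \sum_(d \in [set: T]) \sum_(c \in [set: T]) F c d.
Proof.
move=> H.
have inner1 c : \sum_(d \in [set: T]) F c d = \sum_(d <- fset_set D) F c d.
  by apply: fsum_sub => // d /H [].
have inner2 d : \sum_(c \in [set: T]) F c d = \sum_(c <- fset_set S) F c d.
  by apply: fsum_sub => // c /H [].
under eq_fsbigr do rewrite inner1.
under [RHS]eq_fsbigr do rewrite inner2.
rewrite (@fsum_sub _ _ _ fS); last first.
  move=> c /= Hc; have [//|Sc] := pselect (S c); move/eqP: Hc; case.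
  by apply: big1 => d _; apply/eqP; apply: contra_notT Sc => /H [].
rewrite [RHS](@fsum_sub _ _ _ fD); last first.
  move=> d /= Hd; have [//|Dd] := pselect (D d); move/eqP: Hd; case.
  by apply: big1 => c _; apply/eqP; apply: contra_notT Dd => /H [].
exact: exchange_big.
Qed.

End FSums.

Lemma fsum_reindex (G : groupType) (V : zmodType) (F : G -> V) (g : G) :
  \sum_(c \in [set: G]) F c = \sum_(c \in [set: G]) F (g * c)%g.
Proof.
apply: (reindex_fsbigT (fun c => g * c)%g F).
by exists (fun c => g^-1 * c)%g => c /=; rewrite ?mulKg ?mulVKg.
Qed.


Section Orbit.
Variables (k : pzRingType) (G : groupType) (C : lincat k) (hC : lincat_laws C)
  (A : gcat G C).

Lemma hcast_idc (x x' y y' : lob C) (p : x = x') (q : y = y') (e : x = y) :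
  hcast p q (idc e) = idc (etrans (etrans (esym p) e) q).
Proof. by destruct p, q, e. Qed.

Lemma ofam_to_ohom (x y : lob C) (f : ofamily A x y) (ok : ofamily_ok f) :
  ofam (to_ohom f) = f.
Proof. by rewrite /to_ohom; case: pselect. Qed.

Lemma Pfam_eq (x y : lob C) (f : lhom C x y) a : Pfam A f a a = fhom (act A a) f.
Proof. by rewrite /Pfam; case: eqP => // e; rewrite hcast_id. Qed.

Lemma Pfam_neq (x y : lob C) (f : lhom C x y) a b : a != b -> Pfam A f a b = 0.
Proof. by rewrite /Pfam; case: eqP. Qed.

Lemma Pfam_ok (x y : lob C) (f : lhom C x y) : ofamily_ok (Pfam A f).
Proof.
split.
- move=> a; apply: (@sub_finite_set _ _ [set a]); last exact: finite_set1.
  by move=> b /=; case: (eqVneq a b) => [->//|/Pfam_neq ->]; rewrite eqxx.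
- move=> b; apply: (@sub_finite_set _ _ [set b]); last exact: finite_set1.
  by move=> a /=; case: (eqVneq a b) => [->//|/Pfam_neq ->]; rewrite eqxx.
- move=> g a b; case: (eqVneq a b) => [<-|ne].
    by rewrite !Pfam_eq actM_hom.
  rewrite !Pfam_neq ?hcast0 ?fhom0 //.
  by apply: contraNN ne => /eqP /mulgI ->.
Qed.

Lemma ofam_Pmor (x y : lob C) (f : lhom C x y) : ofam (Pmor A f) = Pfam A f.
Proof. exact: ofam_to_ohom (Pfam_ok f). Qed.

Lemma phifamE (mu : G) (x : lob C) a b (e : a = (b * mu)%g)
  (p : fob (act A a) x = fob (act A b) (fob (act A mu) x)) :
  phifam A mu x a b = idc p.
Proof. by rewrite /phifam; case: eqP => // e'; rewrite /idc; apply: hcast_pi. Qed.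

Lemma phifam_neq (mu : G) (x : lob C) a b : a != (b * mu)%g -> phifam A mu x a b = 0.
Proof. by rewrite /phifam; case: eqP. Qed.

Lemma phifam_ok (mu : G) (x : lob C) : ofamily_ok (phifam A mu x).
Proof.
split.
- move=> a; apply: (@sub_finite_set _ _ [set (a * mu^-1)%g]); last exact: finite_set1.
  move=> b /=; case: (eqVneq a (b * mu)%g) => [->|/phifam_neq ->]; last by rewrite eqxx.
  by rewrite mulgK.
- move=> b; apply: (@sub_finite_set _ _ [set (b * mu)%g]); last exact: finite_set1.
  move=> a /=; case: (eqVneq a (b * mu)%g) => [->//|/phifam_neq ->].
  by rewrite eqxx.
- move=> g a b; case: (eqVneq a (b * mu)%g) => [e|ne].
    rewrite (phifamE (b:=b) e (etrans (f_equal (fun c => fob (act A c) x) e) (actM_ob A b mu x))).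
    have e' : (g * a = (g * b) * mu)%g by rewrite e mulgA.
    rewrite (phifamE e' (etrans (f_equal (fun c => fob (act A c) x) e') (actM_ob A (g * b)%g mu x))).
    by rewrite hcast_idc fhom_idc; apply: idc_pi.
  rewrite !phifam_neq ?hcast0 ?fhom0 //.
  by apply: contraNN ne => /eqP; rewrite -mulgA => /mulgI ->.
Qed.

Lemma ofam_phican (mu : G) (x : lob C) : ofam (phican A mu x) = phifam A mu x.
Proof. exact: ofam_to_ohom (phifam_ok mu x). Qed.

Definition psifam (mu : G) (x : lob C) : ofamily A (fob (act A mu) x) x :=
  fun a b =>
    match b =P (a * mu)%g with
    | ReflectT e =>
        idc (etrans (esym (actM_ob A a mu x))
                    (f_equal (fun c => fob (act A c) x) (esym e)))
    | ReflectF _ => 0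
    end.

Lemma psifamE (mu : G) (x : lob C) a b (e : b = (a * mu)%g)
  (p : fob (act A a) (fob (act A mu) x) = fob (act A b) x) :
  psifam mu x a b = idc p.
Proof. by rewrite /psifam; case: eqP => // e'; apply: idc_pi. Qed.

Lemma psifam_neq (mu : G) (x : lob C) a b : b != (a * mu)%g -> psifam mu x a b = 0.
Proof. by rewrite /psifam; case: eqP. Qed.

Lemma psifam_ok (mu : G) (x : lob C) : ofamily_ok (psifam mu x).
Proof.
split.
- move=> a; apply: (@sub_finite_set _ _ [set (a * mu)%g]); last exact: finite_set1.
  move=> b /=; case: (eqVneq b (a * mu)%g) => [->//|/psifam_neq ->].
  by rewrite eqxx.
- move=> b; apply: (@sub_finite_set _ _ [set (b * mu^-1)%g]); last exact: finite_set1.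
  move=> a /=; case: (eqVneq b (a * mu)%g) => [->|/psifam_neq ->]; last by rewrite eqxx.
  by rewrite mulgK.
- move=> g a b; case: (eqVneq b (a * mu)%g) => [e|ne].
    rewrite (psifamE e (etrans (esym (actM_ob A a mu x))
                    (f_equal (fun c => fob (act A c) x) (esym e)))).
    have e' : (g * b = (g * a) * mu)%g by rewrite e mulgA.
    rewrite (psifamE e' (etrans (esym (actM_ob A (g * a)%g mu x))
                    (f_equal (fun c => fob (act A c) x) (esym e')))).
    by rewrite hcast_idc fhom_idc; apply: idc_pi.
  rewrite !psifam_neq ?hcast0 ?fhom0 //.
  by apply: contraNN ne => /eqP; rewrite -mulgA => /mulgI ->.
Qed.

Definition psican (mu : G) (x : lob C) : ohom A (fob (act A mu) x) x :=
  to_ohom (psifam mu x).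

Lemma ofam_psican (mu : G) (x : lob C) : ofam (psican mu x) = psifam mu x.
Proof. exact: ofam_to_ohom (psifam_ok mu x). Qed.

End Orbit.


Lemma fsumN0 (T : choiceType) (V : zmodType) (F : T -> V) :
  \sum_(i \in [set: T]) F i != 0 -> exists2 c, True & F c != 0.
Proof.
move=> H; apply: contrapT => H'; move/eqP: H; apply; apply: fsum0 => i.
by apply/eqP; apply: contra_notT H' => Hi; exists i.
Qed.

Section Comp.
Variables (k : pzRingType) (G : groupType) (C : lincat k) (hC : lincat_laws C)
  (A : gcat G C).

Lemma ofam_fin1 (x y : lob C) (f : ohom A x y) a : finite_set [set b | ofam f a b != 0].
Proof. by case: f => f [f1 f2 f3]; exact: f1. Qed.

Lemma ofam_fin2 (x y : lob C) (f : ohom A x y) b :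
  finite_set [set a | ofam f a b != 0].
Proof. by case: f => f [f1 f2 f3]; exact: f2. Qed.

Lemma ofam_equiv (x y : lob C) (f : ohom A x y) g a b :
  hcast (actM_ob A g a x) (actM_ob A g b y) (ofam f (g * a)%g (g * b)%g)
  = fhom (act A g) (ofam f a b).
Proof. by case: f => f [f1 f2 f3]; exact: f3. Qed.

Lemma ofam_shift (x y : lob C) (f : ohom A x y) g a b u v
  (eu : u = (g * a)%g) (ev : v = (g * b)%g)
  (p : fob (act A g) (fob (act A a) x) = fob (act A u) x)
  (q : fob (act A g) (fob (act A b) y) = fob (act A v) y) :
  ofam f u v = hcast p q (fhom (act A g) (ofam f a b)).
Proof. by subst u v; rewrite -ofam_equiv hcast_trans hcast_id. Qed.

Lemma comp_supp (x y z : lob C) (g : ohom A y z) (f : ohom A x y) a b :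
  supp (fun c => lcomp (ofam g c b) (ofam f a c)) `<=` [set c | ofam f a c != 0].
Proof.
move=> c /=; apply: contraNN => /eqP ->; by rewrite lcomp0.
Qed.

Lemma comp_supp2 (x y z : lob C) (g : ohom A y z) (f : ohom A x y) a b :
  supp (fun c => lcomp (ofam g c b) (ofam f a c)) `<=` [set c | ofam g c b != 0].
Proof.
move=> c /=; apply: contraNN => /eqP ->; by rewrite lcomp0l.
Qed.

Lemma ocomp_ok (x y z : lob C) (g : ohom A y z) (f : ohom A x y) :
  ofamily_ok (fun a b => \sum_(c \in [set: G]) lcomp (ofam g c b) (ofam f a c)).
Proof.
split.
- move=> a.
  apply: (@sub_finite_set _ _ (\bigcup_(c in [set c | ofam f a c != 0]) [set b | ofam g c b != 0])).
    move=> b /= /fsumN0 [c _ H]; exists c.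
      by move: H; apply: contraNN => /eqP ->; rewrite lcomp0.
    by move: H; apply: contraNN => /eqP ->; rewrite lcomp0l.
  by apply: bigcup_finite => [|c _]; [exact: ofam_fin1 | exact: ofam_fin1].
- move=> b.
  apply: (@sub_finite_set _ _ (\bigcup_(c in [set c | ofam g c b != 0])
                                 [set a | ofam f a c != 0])).
    move=> a /= /fsumN0 [c _ H]; exists c.
      by move: H; apply: contraNN => /eqP ->; rewrite lcomp0l.
    by move: H; apply: contraNN => /eqP ->; rewrite lcomp0.
  by apply: bigcup_finite => [|c _]; [exact: ofam_fin2 | exact: ofam_fin2].
- move=> h a b.
  have fin1 := sub_finite_set (comp_supp (g:=g) (f:=f) (a:=(h * a)%g) (b:=(h * b)%g)) (ofam_fin1 f (h * a)%g).
  have fin2 := sub_finite_set (comp_supp (g:=g) (f:=f) (a:=a) (b:=b)) (ofam_fin1 f a).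
  rewrite (fsum_lin (hcast0 (actM_ob A h a x) (actM_ob A h b z))
             (hcastD (actM_ob A h a x) (actM_ob A h b z)) fin1).
  rewrite (fsum_lin (fhom0 (act A h) _ _) (@fhom_add _ _ _ (act A h) _ _) fin2).
  rewrite (fsum_reindex _ h); apply: eq_fsbigr => c _.
  by rewrite (hcast_lcomp _ (actM_ob A h c y)) !ofam_equiv fhom_comp.
Qed.

Lemma ofam_ocomp (x y z : lob C) (g : ohom A y z) (f : ohom A x y) a b :
  ofam (ocomp g f) a b = \sum_(c \in [set: G]) lcomp (ofam g c b) (ofam f a c).
Proof. by rewrite /ocomp ofam_to_ohom //; exact: ocomp_ok. Qed.

Lemma P_comp (x y z : lob C) (g : lhom C y z) (f : lhom C x y) :
  ocomp (Pmor A g) (Pmor A f) = Pmor A (lcomp g f).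
Proof.
apply: ohom_ext => a b; rewrite ofam_ocomp !ofam_Pmor.
rewrite (@fsum_single _ _ _ a); last by move=> c ne; rewrite (@Pfam_neq _ _ _ A _ _ f a c) ?lcomp0 // eq_sym.
case: (eqVneq a b) => [<-|ne]; first by rewrite !Pfam_eq fhom_comp.
by rewrite (@Pfam_neq _ _ _ A _ _ g a b) // (@Pfam_neq _ _ _ A _ _ (lcomp g f) a b) // lcomp0l.
Qed.

Lemma P_add (x y : lob C) (f g : lhom C x y) :
  Pmor A (f + g) = Pmor A f + Pmor A g.
Proof.
apply: ohom_ext => a b /=; rewrite !ofam_Pmor.
case: (eqVneq a b) => [<-|ne]; first by rewrite !Pfam_eq fhom_add.
by rewrite !Pfam_neq // addr0.
Qed.

Lemma P_scale (x y : lob C) (c : k) (f : lhom C x y) :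
  Pmor A (c *: f) = c *: Pmor A f.
Proof.
apply: ohom_ext => a b /=; rewrite !ofam_Pmor.
case: (eqVneq a b) => [<-|ne]; first by rewrite !Pfam_eq fhom_scale.
by rewrite !Pfam_neq // scaler0.
Qed.

End Comp.


Section Orbit2.
Variables (k : pzRingType) (G : groupType) (C : lincat k) (hC : lincat_laws C)
  (A : gcat G C).

Let ofam_ocomp := ofam_ocomp hC (A:=A).
Let lcomp0 := lcomp0 hC.
Let lcomp0l := lcomp0l hC.
Let lcomp_idcl := lcomp_idcl hC.
Let lcomp_idcr := lcomp_idcr hC.
Let idc_comp := idc_comp hC.

Lemma phifam_idc (mu : G) (x : lob C) a b : a = (b * mu)%g ->
  exists p, phifam A mu x a b = idc p.
Proof.
move=> e; exists (etrans (f_equal (fun c => fob (act A c) x) e) (actM_ob A b mu x)).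
exact: phifamE.
Qed.

Lemma psifam_idc (mu : G) (x : lob C) a b : b = (a * mu)%g ->
  exists p, psifam A mu x a b = idc p.
Proof.
move=> e; exists (etrans (esym (actM_ob A a mu x))
                    (f_equal (fun c => fob (act A c) x) (esym e))).
exact: psifamE.
Qed.

Lemma ofam_shift' (x y : lob C) (f : ohom A x y) g a b u v :
  u = (g * a)%g -> v = (g * b)%g ->
  exists p q, ofam f u v = hcast p q (fhom (act A g) (ofam f a b)).
Proof.
move=> eu ev; subst u v; exists (esym (actM_ob A g a x)), (esym (actM_ob A g b y)).
by rewrite -ofam_equiv hcast_trans hcast_id.
Qed.

Lemma ofam_ohcast (x y y' : lob C) (e : y = y') (f : ohom A x y) a b :
  ofam (@hcast _ (orbit_cat A) x x y y' erefl e f) a b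
  = hcast erefl (f_equal (fob (act A b)) e) (ofam f a b).
Proof. by destruct e. Qed.

Lemma phi_nat (x y : lob C) (f : lhom C x y) (mu : G) :
  ocomp (phican A mu y) (Pmor A f)
  = ocomp (Pmor A (fhom (act A mu) f)) (phican A mu x).
Proof.
apply: ohom_ext => a b; rewrite !ofam_ocomp.
rewrite !ofam_Pmor !ofam_phican.
rewrite (@fsum_single _ _ _ a); last first.
  by move=> c ne; rewrite (@Pfam_neq _ _ _ A _ _ f a c) ?lcomp0 // eq_sym.
rewrite [RHS](@fsum_single _ _ _ b); last first.
  by move=> c ne; rewrite (@Pfam_neq _ _ _ A _ _ _ c b) ?lcomp0l.
rewrite !Pfam_eq.
case: (eqVneq a (b * mu)%g) => [e|ne].
  have [p ->] := phifam_idc y e; have [q ->] := phifam_idc x e.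
  subst a; rewrite lcomp_idcl lcomp_idcr -actM_hom hcast_trans.
  exact: hcast_pi.
by rewrite !phifam_neq // lcomp0l lcomp0.
Qed.

Lemma psi_phi (mu : G) (x : lob C) :
  ocomp (psican A mu x) (phican A mu x) = Pmor A (lidm C x).
Proof.
apply: ohom_ext => a b; rewrite ofam_ocomp ofam_Pmor ofam_phican ofam_psican.
rewrite (@fsum_single _ _ _ (a * mu^-1)%g); last first.
  move=> c ne; rewrite phifam_neq ?lcomp0 //.
  by apply: contraNN ne => /eqP ->; rewrite mulgK.
have e : a = (a * mu^-1 * mu)%g by rewrite mulgVK.
have [p ->] := phifam_idc x e.
case: (eqVneq a b) => [eb|ne].
  subst b; have [q ->] := psifam_idc x e.
  by rewrite idc_comp idc_refl Pfam_eq fhom_id.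
rewrite psifam_neq ?lcomp0l ?Pfam_neq //.
by rewrite -e eq_sym.
Qed.

Lemma phi_psi (mu : G) (x : lob C) :
  ocomp (phican A mu x) (psican A mu x) = Pmor A (lidm C (fob (act A mu) x)).
Proof.
apply: ohom_ext => a b; rewrite ofam_ocomp ofam_Pmor ofam_phican ofam_psican.
rewrite (@fsum_single _ _ _ (a * mu)%g); last first.
  by move=> c ne; rewrite psifam_neq ?lcomp0.
have [p ->] := psifam_idc x (erefl (a * mu)%g).
case: (eqVneq a b) => [eb|ne].
  subst b; have [q ->] := phifam_idc x (erefl (a * mu)%g).
  by rewrite idc_comp idc_refl Pfam_eq fhom_id.
rewrite phifam_neq ?lcomp0l ?Pfam_neq //.
by apply: contraNN ne => /eqP /mulIg ->.
Qed.

Lemma phi1 (x : lob C) :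
  @hcast _ (orbit_cat A) _ _ _ _ erefl (act1_ob A x) (phican A 1%g x)
  = Pmor A (lidm C x).
Proof.
apply: ohom_ext => a b; rewrite ofam_ohcast ofam_Pmor ofam_phican.
case: (eqVneq a b) => [eb|ne].
  subst b; have [p ->] := phifam_idc x (esym (mulg1 a)).
  by rewrite hcast_idc idc_refl Pfam_eq fhom_id.
by rewrite phifam_neq ?hcast0 ?Pfam_neq // mulg1.
Qed.

Lemma phiM (a b : G) (x : lob C) :
  @hcast _ (orbit_cat A) _ _ _ _ erefl (actM_ob A b a x) (phican A (b * a)%g x)
  = ocomp (phican A b (fob (act A a) x)) (phican A a x).
Proof.
apply: ohom_ext => c d; rewrite ofam_ohcast ofam_ocomp !ofam_phican.
rewrite (@fsum_single _ _ _ (c * a^-1)%g); last first.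
  move=> e ne; rewrite (@phifam_neq _ _ _ A a x c e) ?lcomp0 //.
  by apply: contraNN ne => /eqP ->; rewrite mulgK.
have ea : c = (c * a^-1 * a)%g by rewrite mulgVK.
have [q ->] := phifam_idc x ea.
case: (eqVneq c (d * (b * a))%g) => [E|ne].
  have [p ->] := phifam_idc x E.
  have Eb : (c * a^-1 = d * b)%g by rewrite E mulgA mulgK.
  have [r ->] := phifam_idc (fob (act A a) x) Eb.
  by rewrite hcast_idc idc_comp; apply: idc_pi.
rewrite phifam_neq ?hcast0 // phifam_neq ?lcomp0l //.
by apply: contraNN ne => /eqP E; rewrite ea E mulgA.
Qed.

Lemma Pmor0 (x y : lob C) : Pmor A (0 : lhom C x y) = 0.
Proof.
apply: ohom_ext => a b; rewrite ofam_Pmor.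
case: (eqVneq a b) => [<-|ne]; first by rewrite Pfam_eq fhom0.
by rewrite Pfam_neq.
Qed.

Lemma ocomp0l (x y z : lob C) (f : ohom A x y) : ocomp (0 : ohom A y z) f = 0.
Proof.
by apply: ohom_ext => a b; rewrite ofam_ocomp fsum0 // => c; rewrite lcomp0l.
Qed.

Lemma ocomp0r (x y z : lob C) (g : ohom A y z) : ocomp g (0 : ohom A x y) = 0.
Proof.
by apply: ohom_ext => a b; rewrite ofam_ocomp fsum0 // => c; rewrite lcomp0.
Qed.

Lemma ofam_sum (x y : lob C) (F : G -> ohom A x y) (fin : finite_set (supp F)) a b :
  ofam (\sum_(i \in [set: G]) F i) a b = \sum_(i \in [set: G]) ofam (F i) a b.
Proof.
exact: (fsum_lin (phi := fun h : ohom A x y => ofam h a b) erefl (fun u v => erefl) fin).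
Qed.

Lemma Q_inner (x y : lob C) b (h : lhom C (fob (act A 1%g) x) (fob (act A b) y)) a e :
  ofam (ocomp (Pmor A h) (phican A 1%g x)) a e
  = lcomp (Pfam A h a e) (phifam A 1%g x a a).
Proof.
rewrite ofam_ocomp ofam_Pmor ofam_phican (@fsum_single _ _ _ a) //.
by move=> d ne; rewrite phifam_neq ?lcomp0 // mulg1 eq_sym.
Qed.

Lemma Q_entry (x y : lob C) b (h : lhom C (fob (act A 1%g) x) (fob (act A b) y)) a c :
  ofam (ocomp (psican A b y) (ocomp (Pmor A h) (phican A 1%g x))) a c
  = lcomp (psifam A b y a c) (lcomp (fhom (act A a) h) (phifam A 1%g x a a)).
Proof.
rewrite ofam_ocomp ofam_psican.
under eq_fsbigr => e _ do rewrite Q_inner.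
rewrite (@fsum_single _ _ _ a); first by rewrite Pfam_eq.
by move=> e ne; rewrite (@Pfam_neq _ _ _ A _ _ h a e) ?lcomp0l ?lcomp0 // eq_sym.
Qed.

Lemma K1 (x y : lob C) (f : ohom A x y) :
  f = \sum_(b \in [set: G])
        ocomp (psican A b y) (ocomp (Pmor A (ofam f 1%g b)) (phican A 1%g x)).
Proof.
have fin : finite_set (supp (fun b =>
   ocomp (psican A b y) (ocomp (Pmor A (ofam f 1%g b)) (phican A 1%g x)))).
  apply: sub_finite_set (ofam_fin1 f 1%g) => b /=; apply: contraNN => /eqP ->.
  by rewrite Pmor0 ocomp0l ocomp0r.
apply: ohom_ext => a c; rewrite ofam_sum //.
under eq_fsbigr => b _ do rewrite Q_entry.
rewrite (@fsum_single _ _ _ (a^-1 * c)%g); last first.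
  by move=> b ne; rewrite psifam_neq ?lcomp0l //; apply: contraNN ne => /eqP ->; rewrite mulKg.
have ec : c = (a * (a^-1 * c))%g by rewrite mulVKg.
have [p ->] := psifam_idc y ec.
have [q ->] := phifam_idc x (esym (mulg1 a)).
have [p' [q' ->]] := ofam_shift' f (esym (mulg1 a)) ec.
rewrite lcomp_idcr lcomp_idcl hcast_trans.
exact: hcast_pi.
Qed.

End Orbit2.

Unset SsrOldRewriteGoalsOrder.


Section Psi.
Variables (k : pzRingType) (G : groupType) (C : lincat k) (hC : lincat_laws C)
  (A : gcat G C) (C' : lincat k) (hC' : lincat_laws C').

Definition iinv (F : invfun C' A) (a : G) (x : lob C) :
  lhom C' (fob (ifun F) (fob (act A a) x)) (fob (ifun F) x) :=
  projT1 (boolp.cid (iadj_iso F a x)).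

Lemma iinv_l (F : invfun C' A) a x : lcomp (iinv F a x) (iadj F a x) = lidm C' _.
Proof. by rewrite /iinv; case: boolp.cid => g [] /=. Qed.

Lemma iinv_r (F : invfun C' A) a x : lcomp (iadj F a x) (iinv F a x) = lidm C' _.
Proof. by rewrite /iinv; case: boolp.cid => g [] /=. Qed.

Lemma inv_unique (X Y : lob C') (p : lhom C' X Y) (i j : lhom C' Y X) :
  lcomp i p = lidm C' X -> lcomp p j = lidm C' Y -> i = j.
Proof.
move=> ip pj; by rewrite -[i](compm1 hC') -pj Defs.compA // ip comp1m.
Qed.

Variable (F : invfun C' A).
Local Notation Fo := (fob (ifun F)).
Local Notation Fh := (fhom (ifun F)).

Definition Tfam (x y : lob C) (f : ohom A x y) (u v : G) : lhom C' (Fo x) (Fo y) :=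
  lcomp (iinv F v y) (lcomp (Fh (ofam f u v)) (iadj F u x)).

Lemma shift_core (x y : lob C) (g u v : G) (h : lhom C (fob (act A u) x) (fob (act A v) y))
  (X' Y' : lob C) (e1 : X' = fob (act A g) (fob (act A u) x))
  (e2 : Y' = fob (act A g) (fob (act A v) y))
  (f' : lhom C X' Y') (psi' : lhom C' (Fo x) (Fo X')) (psi'' : lhom C' (Fo y) (Fo Y'))
  (iota' : lhom C' (Fo Y') (Fo y)) :
  hcast e1 e2 f' = fhom (act A g) h ->
  hcast erefl (f_equal Fo e1) psi' = lcomp (iadj F g _) (iadj F u x) ->
  hcast erefl (f_equal Fo e2) psi'' = lcomp (iadj F g _) (iadj F v y) ->
  lcomp iota' psi'' = lidm C' _ ->
  lcomp iota' (lcomp (Fh f') psi')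
  = lcomp (iinv F v y) (lcomp (Fh h) (iadj F u x)).
Proof.
subst X' Y' => /= -> -> -> i'l.
have -> : iota' = lcomp (iinv F v y) (iinv F g _).
  apply: (inv_unique i'l).
  by rewrite -Defs.compA // [lcomp (iadj F v y) _]Defs.compA // iinv_r comp1m // iinv_r.
have E : lcomp (Fh (fhom (act A g) h)) (lcomp (iadj F g _) (iadj F u x))
   = lcomp (iadj F g _) (lcomp (Fh h) (iadj F u x)).
  by rewrite Defs.compA // -iadj_nat -Defs.compA.
by rewrite -Defs.compA // E [lcomp (iinv F g _) _]Defs.compA // iinv_l comp1m.
Qed.

Lemma Tshift (x y : lob C) (f : ohom A x y) (g u v : G) :
  Tfam f (g * u)%g (g * v)%g = Tfam f u v.
Proof.
rewrite /Tfam; apply: (shift_core (e1 := actM_ob A g u x) (e2 := actM_ob A g v y)).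
- exact: ofam_equiv.
- exact: iadjM.
- exact: iadjM.
- exact: iinv_l.
Qed.

Lemma Tsupp (x y : lob C) (f : ohom A x y) u :
  supp (Tfam f u) `<=` [set b | ofam f u b != 0].
Proof.
move=> b /=; apply: contraNN => /eqP; rewrite /Tfam => ->.
by rewrite fhom0 lcomp0l // lcomp0.
Qed.

Lemma Tfin (x y : lob C) (f : ohom A x y) u : finite_set (supp (Tfam f u)).
Proof. exact: sub_finite_set (@Tsupp x y f u) (ofam_fin1 f u). Qed.

Lemma Tany (x y : lob C) (f : ohom A x y) c :
  \sum_(b \in [set: G]) Tfam f 1%g b = \sum_(b \in [set: G]) Tfam f c b.
Proof.
rewrite [RHS](fsum_reindex _ c).
by apply: eq_fsbigr => b _; rewrite -{1}(mulg1 c) Tshift.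
Qed.

Definition Psi_hom (x y : lob C) (f : ohom A x y) : lhom C' (Fo x) (Fo y) :=
  \sum_(b \in [set: G]) Tfam f 1%g b.

Lemma lcomp_fsuml (x y z : lob C') (H : G -> lhom C' y z) (f : lhom C' x y)
  (fin : finite_set (supp H)) :
  lcomp (\sum_(i \in [set: G]) H i) f = \sum_(i \in [set: G]) lcomp (H i) f.
Proof.
apply: (@fsum_lin _ _ _ (fun h => lcomp h f)) => //.
  exact: lcomp0l.
by move=> u v; rewrite compDl.
Qed.

Lemma lcomp_fsumr (x y z : lob C') (g : lhom C' y z) (H : G -> lhom C' x y)
  (fin : finite_set (supp H)) :
  lcomp g (\sum_(i \in [set: G]) H i) = \sum_(i \in [set: G]) lcomp g (H i).
Proof.
apply: (@fsum_lin _ _ _ (fun h => lcomp g h)) => //.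
  exact: lcomp0.
by move=> u v; rewrite compDr.
Qed.

Lemma Psi_id (x : lob C) : Psi_hom (Pmor A (lidm C x)) = lidm C' (Fo x).
Proof.
have H : forall b, b != 1%g -> Tfam (Pmor A (lidm C x)) 1%g b = 0.
  by move=> b ne; rewrite /Tfam ofam_Pmor Pfam_neq 1?eq_sym // fhom0 lcomp0l // lcomp0.
rewrite /Psi_hom (fsum_single H).
by rewrite /Tfam ofam_Pmor Pfam_eq !fhom_id comp1m // iinv_l.
Qed.

Lemma T_comp (x y z : lob C) (g : ohom A y z) (f : ohom A x y) c d :
  lcomp (Tfam g c d) (Tfam f 1%g c)
  = lcomp (iinv F d z) (lcomp (Fh (lcomp (ofam g c d) (ofam f 1%g c))) (iadj F 1%g x)).
Proof.
rewrite /Tfam fhom_comp -!Defs.compA //.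
by rewrite [lcomp (iadj F c y) _]Defs.compA // iinv_r comp1m.
Qed.

Lemma Psi_comp (x y z : lob C) (g : ohom A y z) (f : ohom A x y) :
  Psi_hom (ocomp g f) = lcomp (Psi_hom g) (Psi_hom f).
Proof.
rewrite /Psi_hom (lcomp_fsumr _ (Tfin f 1%g)).
under [RHS]eq_fsbigr => c _ do rewrite (Tany g c).
under [RHS]eq_fsbigr => c _ do rewrite (lcomp_fsuml _ (Tfin g c)).
under [RHS]eq_fsbigr => c _ do under eq_fsbigr => d _ do rewrite T_comp.
have fS := ofam_fin1 f 1%g.
have fD : finite_set (\bigcup_(c in [set c | ofam f 1%g c != 0]) [set d | ofam g c d != 0]).
  by apply: bigcup_finite => // c _; exact: ofam_fin1.
rewrite [RHS](fsum_exchange fS fD).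
  move=> c d H; split => /=.
    by move: H; apply: contraNN => /eqP ->; rewrite (lcomp0 hC) fhom0 (lcomp0l hC') (lcomp0 hC').
  exists c.
    by move: H; apply: contraNN => /eqP ->; rewrite (lcomp0 hC) fhom0 (lcomp0l hC') (lcomp0 hC').
  by move: H; apply: contraNN => /eqP ->; rewrite (lcomp0l hC) fhom0 (lcomp0l hC') (lcomp0 hC').
apply: eq_fsbigr => d _; rewrite /Tfam ofam_ocomp //.
have finc := sub_finite_set (comp_supp hC (g:=g) (f:=f) (a:=1%g) (b:=d)) fS.
pose phi := fun h : lhom C (fob (act A 1%g) x) (fob (act A d) z) =>
  lcomp (iinv F d z) (lcomp (Fh h) (iadj F 1%g x)).
have phi0 : phi 0 = 0 by rewrite /phi fhom0 lcomp0l // lcomp0.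
have phiD u v : phi (u + v) = phi u + phi v.
  by rewrite /phi fhom_add compDl // compDr.
exact: (fsum_lin phi0 phiD finc).
Qed.

Lemma Psi_add (x y : lob C) (f g : ohom A x y) :
  Psi_hom (f + g) = Psi_hom f + Psi_hom g.
Proof.
rewrite /Psi_hom -(fsum_add (Tfin f 1%g) (Tfin g 1%g)); apply: eq_fsbigr => b _.
by rewrite /Tfam /= fhom_add compDl // compDr.
Qed.

Lemma Psi_scale (x y : lob C) (c : k) (f : ohom A x y) :
  Psi_hom (c *: f) = c *: Psi_hom f.
Proof.
rewrite /Psi_hom (fsum_lin (phi := fun h => c *: h) (scaler0 _ c) (scalerDr c) (Tfin f 1%g)).
apply: eq_fsbigr => b _.
by rewrite /Tfam /= fhom_scale compZl // compZr.
Qed.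

Definition PsiF : lfunctor (orbit_cat A) C' :=
  @LFunctor k (orbit_cat A) C' Fo Psi_hom Psi_id Psi_comp Psi_add Psi_scale.

End Psi.

Set SsrOldRewriteGoalsOrder.


Section Phi.
Variables (k : pzRingType) (G : groupType) (C : lincat k) (hC : lincat_laws C)
  (A : gcat G C) (C' : lincat k) (hC' : lincat_laws C').

Section PhiObj.
Variable (H : lfunctor (orbit_cat A) C').

Lemma PF_id (x : lob C) : fhom H (Pmor A (lidm C x)) = lidm C' (fob H x).
Proof. exact: (fhom_id H x). Qed.

Lemma PF_comp (x y z : lob C) (g : lhom C y z) (f : lhom C x y) :
  fhom H (Pmor A (lcomp g f)) = lcomp (fhom H (Pmor A g)) (fhom H (Pmor A f)).
Proof. by rewrite -(P_comp hC); exact: (fhom_comp H). Qed.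

Lemma PF_add (x y : lob C) (f g : lhom C x y) :
  fhom H (Pmor A (f + g)) = fhom H (Pmor A f) + fhom H (Pmor A g).
Proof. by rewrite P_add; exact: (fhom_add H). Qed.

Lemma PF_scale (x y : lob C) (c : k) (f : lhom C x y) :
  fhom H (Pmor A (c *: f)) = c *: fhom H (Pmor A f).
Proof. by rewrite P_scale; exact: (fhom_scale H). Qed.

Definition PF : lfunctor C C' :=
  @LFunctor k C C' (fob H) (fun x y f => fhom H (Pmor A f)) PF_id PF_comp PF_add PF_scale.

Definition Padj (a : G) (x : lob C) :
  lhom C' (fob PF x) (fob PF (fob (act A a) x)) := fhom H (phican A a x).

Lemma Padj_nat (a : G) (x y : lob C) (f : lhom C x y) :
  lcomp (Padj a y) (fhom PF f) = lcomp (fhom PF (fhom (act A a) f)) (Padj a x).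
Proof.
rewrite /Padj /= -!(fhom_comp H).
by have := phi_nat hC A f a; rewrite /= => ->.
Qed.

Lemma Padj_iso (a : G) (x : lob C) :
  exists g : lhom C' (fob PF (fob (act A a) x)) (fob PF x),
    lcomp g (Padj a x) = lidm C' _ /\ lcomp (Padj a x) g = lidm C' _.
Proof.
exists (fhom H (psican A a x)); rewrite /Padj -!(fhom_comp H).
have E1 := psi_phi hC A a x; have E2 := phi_psi hC A a x.
by split; [rewrite /= E1 | rewrite /= E2]; exact: (fhom_id H).
Qed.

Lemma Padj1 (x : lob C) :
  hcast erefl (f_equal (fob PF) (act1_ob A x)) (Padj 1%g x) = lidm C' (fob PF x).
Proof.
change (hcast erefl (f_equal (fob H) (act1_ob A x)) (fhom H (phican A 1%g x))
        = lidm C' (fob H x)).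
have E : fhom H (@hcast _ (orbit_cat A) _ _ _ _ erefl (act1_ob A x) (phican A 1%g x))
   = hcast erefl (f_equal (fob H) (act1_ob A x)) (fhom H (phican A 1%g x))
  := fhom_hcast H (erefl x) (act1_ob A x) (phican A 1%g x).
rewrite -E phi1; exact: (fhom_id H).
Qed.

Lemma PadjM (a b : G) (x : lob C) :
  hcast erefl (f_equal (fob PF) (actM_ob A b a x)) (Padj (b * a)%g x)
  = lcomp (Padj b (fob (act A a) x)) (Padj a x).
Proof.
change (hcast erefl (f_equal (fob H) (actM_ob A b a x)) (fhom H (phican A (b * a)%g x))
        = lcomp (fhom H (phican A b (fob (act A a) x))) (fhom H (phican A a x))).
have E : fhom H (@hcast _ (orbit_cat A) _ _ _ _ erefl (actM_ob A b a x) (phican A (b * a)%g x))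
   = hcast erefl (f_equal (fob H) (actM_ob A b a x)) (fhom H (phican A (b * a)%g x))
  := fhom_hcast H (erefl x) (actM_ob A b a x) (phican A (b * a)%g x).
rewrite -E (phiM hC); exact: (fhom_comp H).
Qed.

Definition PhiObj : invfun C' A :=
  @InvFun k G C C' A PF Padj Padj_nat Padj_iso Padj1 PadjM.

End PhiObj.

Section PhiMor.
Variables (H H' : lfunctor (orbit_cat A) C') (eta : ntrans H H').

Lemma PM_nat (x y : lob C) (f : lhom C x y) :
  lcomp (ncomp eta y) (fhom (PF H) f) = lcomp (fhom (PF H') f) (ncomp eta x).
Proof. exact: (nnat eta (Pmor A f)). Qed.

Definition PMn : ntrans (PF H) (PF H') := @NTrans k C C' (PF H) (PF H') (ncomp eta) PM_nat.

Lemma PM_adj (a : G) (x : lob C) :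
  lcomp (ncomp PMn (fob (act A a) x)) (iadj (PhiObj H) a x)
  = lcomp (iadj (PhiObj H') a x) (ncomp PMn x).
Proof. exact: (nnat eta (phican A a x)). Qed.

Definition PhiMor : invmor (PhiObj H) (PhiObj H') :=
  @InvMor k G C C' A (PhiObj H) (PhiObj H') PMn PM_adj.

End PhiMor.

Lemma ntrans_ext (D D' : lincat k) (F F' : lfunctor D D') (m m' : ntrans F F') :
  (forall x, ncomp m x = ncomp m' x) -> m = m'.
Proof.
case: m m' => c p [c' p'] /= E.
have E' : c = c' by apply: functional_extensionality_dep.
subst c'; by rewrite (proof_irrelevance _ p p').
Qed.

Lemma invmor_ext (F F' : invfun C' A) (m m' : invmor F F') :
  (forall x, ncomp (imor m) x = ncomp (imor m') x) -> m = m'.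
Proof.
case: m m' => c p [c' p'] /= E.
have E' : c = c' by apply: ntrans_ext.
subst c'; by rewrite (proof_irrelevance _ p p').
Qed.

Lemma PhiMor_id (H : lfunctor (orbit_cat A) C') :
  PhiMor (ntrans_id hC' H) = invmor_id hC' (PhiObj H).
Proof. by apply: invmor_ext. Qed.

Lemma PhiMor_comp (H1 H2 H3 : lfunctor (orbit_cat A) C')
  (e2 : ntrans H2 H3) (e1 : ntrans H1 H2) :
  PhiMor (ntrans_comp hC' e2 e1) = invmor_comp hC' (PhiMor e2) (PhiMor e1).
Proof. by apply: invmor_ext. Qed.

Definition PhiFun : functor (Funcat (orbit_cat A) hC') (Invcat A hC') :=
  @Functor (Funcat (orbit_cat A) hC') (Invcat A hC') PhiObj PhiMor PhiMor_id
    (fun H1 H2 H3 e2 e1 => PhiMor_comp e2 e1).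

End Phi.


Section PsiFunS.
Variables (k : pzRingType) (G : groupType) (C : lincat k) (hC : lincat_laws C)
  (A : gcat G C) (C' : lincat k) (hC' : lincat_laws C').

Section PsiMorS.
Variables (F F' : invfun C' A) (m : invmor F F').
Local Notation eta := (ncomp (imor m)).

Lemma eta_inv (b : G) (y : lob C) :
  lcomp (eta y) (iinv F b y) = lcomp (iinv F' b y) (eta (fob (act A b) y)).
Proof.
rewrite -[LHS](comp1m hC') -(iinv_l F' b y) -Defs.compA //.
rewrite [lcomp (iadj F' b y) _]Defs.compA // -(imor_adj m).
by rewrite -Defs.compA // iinv_r compm1.
Qed.

Lemma Tnat (x y : lob C) (f : ohom A x y) u v :
  lcomp (eta y) (Tfam F f u v) = lcomp (Tfam F' f u v) (eta x).
Proof.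
rewrite /Tfam Defs.compA // eta_inv -!Defs.compA //; congr (lcomp _ _).
rewrite -(imor_adj m) [RHS]Defs.compA // -(nnat (imor m)).
by rewrite Defs.compA.
Qed.

Lemma PsiM_nat (x y : lob C) (f : ohom A x y) :
  lcomp (eta y) (Psi_hom F f) = lcomp (Psi_hom F' f) (eta x).
Proof.
rewrite /Psi_hom (lcomp_fsumr hC' _ (Tfin hC' F f 1%g)).
rewrite (lcomp_fsuml hC' _ (Tfin hC' F' f 1%g)).
by apply: eq_fsbigr => b _; exact: Tnat.
Qed.

Definition PsiMor : ntrans (PsiF hC hC' F) (PsiF hC hC' F') :=
  @NTrans k (orbit_cat A) C' (PsiF hC hC' F) (PsiF hC hC' F') eta PsiM_nat.

End PsiMorS.

Lemma PsiMor_id (F : invfun C' A) :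
  PsiMor (invmor_id hC' F) = ntrans_id hC' (PsiF hC hC' F).
Proof. by apply: ntrans_ext. Qed.

Lemma PsiMor_comp (F1 F2 F3 : invfun C' A) (m2 : invmor F2 F3) (m1 : invmor F1 F2) :
  PsiMor (invmor_comp hC' m2 m1) = ntrans_comp hC' (PsiMor m2) (PsiMor m1).
Proof. by apply: ntrans_ext. Qed.

Definition PsiFun : functor (Invcat A hC') (Funcat (orbit_cat A) hC') :=
  @Functor (Invcat A hC') (Funcat (orbit_cat A) hC') (PsiF hC hC') PsiMor PsiMor_id
    (fun F1 F2 F3 m2 m1 => PsiMor_comp m2 m1).

Lemma PsiPhi_hom (H : lfunctor (orbit_cat A) C') (x y : lob C) (f : ohom A x y) :
  Psi_hom (PhiObj hC H) f = fhom H f.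
Proof.
have Einv b z : iinv (PhiObj hC H) b z = fhom H (psican A b z).
  apply: (inv_unique hC' (iinv_l (PhiObj hC H) b z)).
  change (lcomp (fhom H (phican A b z)) (fhom H (psican A b z)) = lidm C' (fob H (fob (act A b) z))).
  rewrite -(fhom_comp H); have := phi_psi hC A b z; rewrite /= => ->.
  exact: (fhom_id H).
have fin : finite_set (supp (fun b =>
   ocomp (psican A b y) (ocomp (Pmor A (ofam f 1%g b)) (phican A 1%g x)))).
  apply: sub_finite_set (ofam_fin1 f 1%g) => b /=; apply: contraNN => /eqP ->.
  by rewrite (Pmor0 A) (ocomp0l hC) (ocomp0r hC).
rewrite [in RHS](K1 hC f).
rewrite (fsum_lin (phi := @fhom _ _ _ H x y) (fhom0 H x y) (@fhom_add _ _ _ H x y) fin).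
apply: eq_fsbigr => b _.
rewrite /Tfam Einv /=.
have -> : ocomp (psican A b y) (ocomp (Pmor A (ofam f 1%g b)) (phican A 1%g x))
  = lcomp (C := orbit_cat A) (psican A b y)
      (lcomp (C := orbit_cat A) (Pmor A (ofam f 1%g b)) (phican A 1%g x)) by [].
by rewrite !(fhom_comp H).
Qed.

Lemma PhiPsi_hom (F : invfun C' A) (x y : lob C) (f : lhom C x y) :
  Psi_hom F (Pmor A f) = fhom (ifun F) f.
Proof.
have H0 : forall b, b != 1%g -> Tfam F (Pmor A f) 1%g b = 0.
  move=> b ne; rewrite /Tfam ofam_Pmor Pfam_neq 1?eq_sym //.
  by rewrite fhom0 (lcomp0l hC') (lcomp0 hC').
rewrite /Psi_hom (fsum_single H0) /Tfam ofam_Pmor Pfam_eq -(iadj_nat F).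
by rewrite Defs.compA // iinv_l comp1m.
Qed.

Lemma iadj_idx (F : invfun C' A) (u v : G) (x : lob C) (e : u = v) :
  iadj F v x
  = lcomp (fhom (ifun F) (idc (f_equal (fun c => fob (act A c) x) e))) (iadj F u x).
Proof. by destruct e; rewrite idc_refl fhom_id comp1m. Qed.

Lemma PhiPsi_adj (F : invfun C' A) (a : G) (x : lob C) :
  Psi_hom F (phican A a x) = iadj F a x.
Proof.
have H0 : forall b, b != a^-1%g -> Tfam F (phican A a x) 1%g b = 0.
  move=> b ne; rewrite /Tfam ofam_phican phifam_neq.
    by rewrite fhom0 (lcomp0l hC') (lcomp0 hC').
  by apply: contraNN ne => /eqP /esym /mulg1_eq <-; rewrite invgK.
rewrite /Psi_hom (fsum_single H0) /Tfam ofam_phican.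
have e1 : (1 = a^-1 * a)%g by rewrite mulVg.
have [p ->] := phifam_idc A x e1.
rewrite (iadj_idx F x (mulVg a)) [lcomp (fhom _ (idc p)) _]Defs.compA // -(fhom_comp (ifun F)).
rewrite (idc_comp hC).
have E := iadjM F a a^-1 x.
have E' : lcomp (iadj F a^-1 (fob (act A a) x)) (iadj F a x)
   = lcomp (fhom (ifun F) (idc (actM_ob A a^-1 a x))) (iadj F (a^-1 * a) x).
  by rewrite -E fhom_idc lcomp_idcl.
rewrite (idc_pi _ (actM_ob A a^-1 a x)) -E' Defs.compA // iinv_l comp1m //.
Qed.

End PsiFunS.


Lemma lfun_ext (k : pzRingType) (D D' : lincat k) (fo : lob D -> lob D')
  (fh1 fh2 : forall x y, lhom D x y -> lhom D' (fo x) (fo y))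
  p1 p2 p3 p4 q1 q2 q3 q4 :
  (forall x y f, fh1 x y f = fh2 x y f) ->
  @LFunctor k D D' fo fh1 p1 p2 p3 p4 = @LFunctor k D D' fo fh2 q1 q2 q3 q4.
Proof.
move=> E.
have E' : fh1 = fh2.
  apply: functional_extensionality_dep => x; apply: functional_extensionality_dep => y.
  by apply: functional_extensionality => f; apply: E.
subst fh2.
by rewrite (proof_irrelevance _ p1 q1) (proof_irrelevance _ p2 q2)
  (proof_irrelevance _ p3 q3) (proof_irrelevance _ p4 q4).
Qed.

Lemma invfun_ext (k : pzRingType) (G : groupType) (C D : lincat k) (A : gcat G C)
  (fo : lob C -> lob D)
  (fh1 fh2 : forall x y, lhom C x y -> lhom D (fo x) (fo y))
  p1 p2 p3 p4 q1 q2 q3 q4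
  (ia1 ia2 : forall (a : G) x, lhom D (fo x) (fo (fob (act A a) x)))
  r1 r2 r3 r4 s1 s2 s3 s4 :
  (forall x y f, fh1 x y f = fh2 x y f) ->
  (forall a x, ia1 a x = ia2 a x) ->
  @InvFun k G C D A (@LFunctor k C D fo fh1 p1 p2 p3 p4) ia1 r1 r2 r3 r4
  = @InvFun k G C D A (@LFunctor k C D fo fh2 q1 q2 q3 q4) ia2 s1 s2 s3 s4.
Proof.
move=> E Ea.
have E' : fh1 = fh2.
  apply: functional_extensionality_dep => x; apply: functional_extensionality_dep => y.
  by apply: functional_extensionality => f; apply: E.
subst fh2.
rewrite (proof_irrelevance _ p1 q1) (proof_irrelevance _ p2 q2)
  (proof_irrelevance _ p3 q3) (proof_irrelevance _ p4 q4).
have Ea' : ia1 = ia2.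
  apply: functional_extensionality_dep => a; apply: functional_extensionality_dep => x.
  exact: Ea.
subst ia2.
by rewrite (proof_irrelevance _ r1 s1) (proof_irrelevance _ r2 s2)
  (proof_irrelevance _ r3 s3) (proof_irrelevance _ r4 s4).
Qed.

Lemma ccast_ncomp (k : pzRingType) (D D' : lincat k) (hD' : lincat_laws D')
  (F1 F2 G1 G2 : lfunctor D D') (e1 : F1 = G1) (e2 : F2 = G2) (m : ntrans F1 F2) x :
  ncomp (@ccast (Funcat D hD') _ _ _ _ e1 e2 m) x
  = hcast (f_equal (fun F => fob F x) e1) (f_equal (fun F => fob F x) e2) (ncomp m x).
Proof. by destruct e1, e2. Qed.

Lemma ccast_imor (k : pzRingType) (G : groupType) (C D : lincat k) (A : gcat G C)
  (hD : lincat_laws D)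
  (F1 F2 G1 G2 : invfun D A) (e1 : F1 = G1) (e2 : F2 = G2) (m : invmor F1 F2) x :
  ncomp (imor (@ccast (Invcat A hD) _ _ _ _ e1 e2 m)) x
  = hcast (f_equal (fun F => fob (ifun F) x) e1) (f_equal (fun F => fob (ifun F) x) e2)
      (ncomp (imor m) x).
Proof. by destruct e1, e2. Qed.

Local Close Scope classical_set_scope.
Local Close Scope ring_scope.

Theorem mainTheorem3 (k : comPzRingType) (G : groupType)
  (C : lincat k) (hC : lincat_laws C) (A : gcat G C)
  (C' : lincat k) (hC' : lincat_laws C') :
  exists (Phi : functor (Funcat (orbit_cat A) hC') (Invcat A hC'))
    (e : forall (H : lfunctor (orbit_cat A) C') (x : lob C),
           fob (ifun (Fob Phi H)) x = fob H x),
    [/\ (* on objects: H |-> (H P, H phi) *)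
        (forall (H : lfunctor (orbit_cat A) C') (x y : lob C) (f : lhom C x y),
           hcast (e H x) (e H y) (fhom (ifun (Fob Phi H)) f)
           = fhom H (Pmor A f)),
        (forall (H : lfunctor (orbit_cat A) C') (a : G) (x : lob C),
           hcast (e H x) (e H (fob (act A a) x)) (iadj (Fob Phi H) a x)
           = fhom H (phican A a x)),
        (* on morphisms: eta |-> eta P *)
        (forall (H H' : lfunctor (orbit_cat A) C') (eta : ntrans H H')
                (x : lob C),
           hcast (e H x) (e H' x) (ncomp (imor (Fhom Phi eta)) x)
           = ncomp eta x)
      & (* and it is an isomorphism of categories *)
        cat_iso Phi].
Proof.
exists (PhiFun hC A hC'), (fun H x => erefl).
split => //.
exists (PsiFun hC A hC'); split.
- have e1 : forall H : lfunctor (orbit_cat A) C', PsiF hC hC' (PhiObj hC H) = H.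
    move=> H; case: H => fo fh p1 p2 p3 p4.
    apply: lfun_ext => x y f.
    exact: (PsiPhi_hom hC hC' (@LFunctor _ _ _ fo fh p1 p2 p3 p4) f).
  exists e1 => H H' eta; apply: ntrans_ext => x.
  by rewrite ccast_ncomp hcast_id.
- have e2 : forall F : invfun C' A, PhiObj hC (PsiF hC hC' F) = F.
    move=> F; case: F => [[fo fh p1 p2 p3 p4] ia r1 r2 r3 r4].
    apply: invfun_ext => [x y f|a x].
      exact: (PhiPsi_hom hC' (@InvFun _ _ _ _ A (@LFunctor _ _ _ fo fh p1 p2 p3 p4) ia r1 r2 r3 r4) f).
    exact: (PhiPsi_adj hC hC' (@InvFun _ _ _ _ A (@LFunctor _ _ _ fo fh p1 p2 p3 p4) ia r1 r2 r3 r4) a x).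
  exists e2 => F F' m; apply: invmor_ext => x.
  by rewrite ccast_imor hcast_id.
Qed.
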